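(* Let $G$ be an infinite group in which every non-abelian subgroup $H$ satisfies $C_G(H)\le H$. Then every normal subgroup of $G$ is abelian or infinite.
   Context: $C_G(H)$ denotes the centralizer of $H$ in $G$. *)

(* Defs.v *)
From Stdlib Require Import List.

Record group_struct (T : Type) (mul : T -> T -> T) (inv : T -> T) (e : T) : Prop := {
  g_assoc : forall x y z, mul x (mul y z) = mul (mul x y) z;
  g_idl : forall x, mul e x = x;
  g_idr : forall x, mul x e = x;
  g_invl : forall x, mul (inv x) x = e;
  g_invr : forall x, mul x (inv x) = e
}.

Section GroupNotions.
Context {T : Type} (mul : T -> T -> T) (inv : T -> T) (e : T).

Definition is_subgroup (H : T -> Prop) : Prop :=
  H e /\ (forall x y, H x -> H y -> H (mul x y)) /\ (forall x, H x -> H (inv x)).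

Definition is_normal (H : T -> Prop) : Prop :=
  is_subgroup H /\ (forall g h, H h -> H (mul (mul (inv g) h) g)).

Definition is_abelian (H : T -> Prop) : Prop :=
  forall x y, H x -> H y -> mul x y = mul y x.

Definition centralizer (H : T -> Prop) : T -> Prop :=
  fun g => forall h, H h -> mul g h = mul h g.

End GroupNotions.

Definition subset {T : Type} (A B : T -> Prop) : Prop := forall x, A x -> B x.

Definition finite_set {T : Type} (A : T -> Prop) : Prop :=
  exists l : list T, forall x, A x -> In x l.

Definition infinite_set {T : Type} (A : T -> Prop) : Prop := ~ finite_set A.

(* Main.v *)
Require Import Defs.
From Stdlib Require Import List Classical.
Import ListNotations.

Fixpoint allseq {T : Type} (l : list T) (k : nat) : list (list T) :=
  match k with
  | 0 => [nil]
  | S k => flat_map (fun y => map (cons y) (allseq l k)) l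
  end.

Lemma allseq_in {T : Type} (l : list T) : forall s,
  (forall y, In y s -> In y l) -> In s (allseq l (length s)).
Proof.
  induction s as [|a s IH]; intros Hs; simpl; [now left|].
  apply in_flat_map. exists a. split; [apply Hs; now left|].
  apply in_map. apply IH. intros y Hy; apply Hs; now right.
Qed.

Lemma restrict_list {T : Type} (N : T -> Prop) : forall l : list T,
  exists l0, (forall x, In x l0 -> N x) /\ (forall x, N x -> In x l -> In x l0).
Proof.
  induction l as [|a l IH].
  - exists nil; split; [intros x []|intros x _ []].
  - destruct IH as [l0 [H1 H2]]. destruct (classic (N a)) as [Ha|Ha].
    + exists (a :: l0); split.
      * intros x [<-|Hx]; auto.
      * intros x Nx [<-|Hx]; [now left|right; auto].
    + exists l0; split; auto.
      intros x Nx [<-|Hx]; [contradiction|auto].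
Qed.

Lemma code_fin {T C : Type} (code : T -> C) : forall L : list C,
  exists M : list T, forall g, In (code g) L -> exists h, In h M /\ code h = code g.
Proof.
  induction L as [|s L IH].
  - exists nil; intros g [].
  - destruct IH as [M HM]. destruct (classic (exists g, code g = s)) as [[g0 Hg0]|Hn].
    + exists (g0 :: M). intros g [Hs|Hg].
      * exists g0; split; [now left|congruence].
      * destruct (HM g Hg) as [h [Hh Hc]]; exists h; split; [now right|auto].
    + exists M. intros g [Hs|Hg].
      * exfalso; apply Hn; eauto.
      * auto.
Qed.

Lemma map_eq_in {A B : Type} (f g : A -> B) : forall l x, In x l ->
  map f l = map g l -> f x = g x.
Proof.
  induction l as [|a l IH]; intros x Hx Heq; [destruct Hx|].
  simpl in Heq; inversion Heq. destruct Hx as [<-|Hx]; auto.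
Qed.

Theorem lemma2p3 (T : Type) (mul : T -> T -> T) (inv : T -> T) (e : T)
  (hG : @group_struct T mul inv e)
  (hinf : infinite_set (fun _ : T => True))
  (hC : forall H : T -> Prop, is_subgroup mul inv e H -> ~ is_abelian mul H ->
        subset (centralizer mul H) H) :
  forall N : T -> Prop, is_normal mul inv e N ->
    is_abelian mul N \/ infinite_set N.
Proof.
  intros N [HsN HnN].
  destruct (classic (is_abelian mul N)) as [Hab|Hnab]; [now left|right].
  intros [l Hl].
  destruct (restrict_list N l) as [l0 [H1 H2]].
  pose (code := fun g => map (fun x => mul (mul (inv g) x) g) l0).
  destruct (code_fin code (allseq l0 (length l0))) as [M HM].
  apply hinf.
  exists (flat_map (fun n => map (fun h => mul n h) M) l0).
  intros g _.
  assert (Hc : In (code g) (allseq l0 (length l0))).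
  { replace (length l0) with (length (code g)) by (unfold code; apply length_map).
    apply allseq_in. unfold code. intros y Hy. apply in_map_iff in Hy.
    destruct Hy as [x [<- Hx]]. apply H2; [apply HnN; auto|apply Hl; apply HnN; auto]. }
  destruct (HM g Hc) as [h [Hh Hch]].
  destruct hG as [assoc idl idr invl invr].
  assert (Hcent : centralizer mul N (mul g (inv h))).
  { intros x Nx.
    assert (Hx : In x l0) by (apply H2; auto).
    assert (E : mul (mul (inv h) x) h = mul (mul (inv g) x) g).
    { unfold code in Hch. exact (map_eq_in _ _ l0 x Hx Hch). }
    assert (E2 := f_equal (fun z => mul g (mul z (inv h))) E). simpl in E2.
    rewrite <- !assoc, invr, idr, !assoc, invr, idl in E2.
    rewrite E2. symmetry; apply assoc. }
  assert (Nc : N (mul g (inv h))) by (apply (hC N HsN Hnab); auto).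
  apply in_flat_map. exists (mul g (inv h)). split; [apply H2; auto; apply Hl; auto|].
  apply in_map_iff. exists h. split; auto.
  rewrite <- assoc, invl, idr. reflexivity.
Qed.
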